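(* Let $N\ge 3$, $G>0$, $m_1,\dots,m_N>0$, let $I$ be a nondegenerate interval, and let $r_1,\dots,r_N:I\to\mathbb{R}^3$ be $C^2$ functions with $r_j(t)\neq r_k(t)$ for all $t\in I$, $j\neq k$, satisfying for all $1\le j<k\le N$ $$(r_j-r_k)''=G\sum_{\substack{i=1\\ i\neq j}}^{N}\frac{m_i(r_i-r_j)}{\|r_i-r_j\|^3}-G\sum_{\substack{i=1\\ i\neq k}}^{N}\frac{m_i(r_i-r_k)}{\|r_i-r_k\|^3}.$$ Then there are two distinct pairs $(j_1,j_2)\neq(j_3,j_4)$ with $1\le j_1<j_2\le N$ and $1\le j_3<j_4\le N$ such that neither $(r_{j_1}-r_{j_2})''$ nor $(r_{j_3}-r_{j_4})''$ is identically $\vec 0$ on $I$.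
   Context: $\|\cdot\|$ is the Euclidean norm on $\mathbb{R}^3$. *)

(* Defs.v *)
From Stdlib Require Import Reals Lra.
From Coquelicot Require Import Coquelicot.
Open Scope R_scope.

Definition is_interval (I : R -> Prop) : Prop :=
  forall a b x, I a -> I b -> a <= x <= b -> I x.

Definition nondegenerate (I : R -> Prop) : Prop :=
  exists a b, I a /\ I b /\ a < b.

(* f has derivative f' at every point of I, relative to I
   (one-sided at endpoints belonging to I). *)
Definition has_derive_on (I : R -> Prop) (f f' : R -> R) : Prop :=
  forall t, I t ->
    filterlim (fun h => (f (t + h) - f t) / h)
      (within (fun h => h <> 0 /\ I (t + h)) (locally 0))
      (locally (f' t)).

Definition continuous_on_I (I : R -> Prop) (f : R -> R) : Prop :=
  forall t, I t -> filterlim f (within I (locally t)) (locally (f t)).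

(* Positions: r j c t is the c-th coordinate (c < 3) of body j (j < N)
   at time t.  Euclidean distance between bodies i and j at time t. *)
Definition dist3 (r : nat -> nat -> R -> R) (i j : nat) (t : R) : R :=
  sqrt ((r i 0%nat t - r j 0%nat t)^2 + (r i 1%nat t - r j 1%nat t)^2
        + (r i 2%nat t - r j 2%nat t)^2).

Definition accel (N : nat) (G : R) (m : nat -> R) (r : nat -> nat -> R -> R)
  (j c : nat) (t : R) : R :=
  G * sum_f_R0 (fun i => if Nat.eq_dec i j then 0
                         else m i * (r i c t - r j c t) / (dist3 r i j t ^ 3))
        (N - 1).

(* Main.v *)
Require Import Defs.
From Stdlib Require Import Reals Lra Lia Classical.
From Coquelicot Require Import Coquelicot.
Open Scope R_scope.

Lemma sum_nonpos (u : nat -> R) n :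
  (forall i, (i <= n)%nat -> u i <= 0) -> sum_f_R0 u n <= 0.
Proof.
  induction n as [|n IH]; intros H; simpl.
  - apply H; lia.
  - assert (u (S n) <= 0) by (apply H; lia).
    assert (sum_f_R0 u n <= 0) by (apply IH; intros; apply H; lia). lra.
Qed.

Lemma sum_nonpos_zero (u : nat -> R) n :
  (forall i, (i <= n)%nat -> u i <= 0) -> sum_f_R0 u n = 0 ->
  forall i, (i <= n)%nat -> u i = 0.
Proof.
  induction n as [|n IH]; intros H Hs i Hi; simpl in Hs.
  - replace i with 0%nat by lia; exact Hs.
  - assert (u (S n) <= 0) by (apply H; lia).
    assert (sum_f_R0 u n <= 0) by (apply sum_nonpos; intros; apply H; lia).
    destruct (Nat.eq_dec i (S n)) as [->|Hne]; [lra|].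
    apply IH; try lra; try lia. intros; apply H; lia.
Qed.

Lemma exists_max (f : nat -> R) n :
  exists j, (j <= n)%nat /\ forall i, (i <= n)%nat -> f i <= f j.
Proof.
  induction n as [|n [j [Hj Hm]]].
  - exists 0%nat; split; [lia|]; intros i Hi; replace i with 0%nat by lia; lra.
  - destruct (Rle_dec (f (S n)) (f j)).
    + exists j; split; [lia|]; intros i Hi.
      destruct (Nat.eq_dec i (S n)) as [->|]; [lra|]; apply Hm; lia.
    + exists (S n); split; [lia|]; intros i Hi.
      destruct (Nat.eq_dec i (S n)) as [->|]; [lra|].
      assert (f i <= f j) by (apply Hm; lia). lra.
Qed.

Lemma dist3_pos r i j t :
  (exists c, (c < 3)%nat /\ r i c t <> r j c t) -> 0 < dist3 r i j t.
Proof.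
  intros [c [Hc Hne]]. unfold dist3. apply sqrt_lt_R0.
  assert (Ha : r i c t - r j c t <> 0) by lra.
  pose proof (Rsqr_pos_lt _ Ha) as Hp. unfold Rsqr in Hp.
  assert (Hc3 : c = 0%nat \/ c = 1%nat \/ c = 2%nat) by lia.
  rewrite <- Rsqr_pow2 in *.
  pose proof (Rle_0_sqr (r i 0%nat t - r j 0%nat t)).
  pose proof (Rle_0_sqr (r i 1%nat t - r j 1%nat t)).
  pose proof (Rle_0_sqr (r i 2%nat t - r j 2%nat t)).
  unfold Rsqr in *.
  destruct Hc3 as [ -> | [ -> | -> ] ]; lra.
Qed.

Lemma sum_nonneg (u : nat -> R) n :
  (forall i, (i <= n)%nat -> 0 <= u i) -> 0 <= sum_f_R0 u n.
Proof.
  induction n as [|n IH]; intros H; simpl.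
  - apply H; lia.
  - assert (0 <= u (S n)) by (apply H; lia).
    assert (0 <= sum_f_R0 u n) by (apply IH; intros; apply H; lia). lra.
Qed.

Lemma coord_equal N G m r t c :
  (1 <= N)%nat -> 0 < G -> (forall i, (i < N)%nat -> 0 < m i) ->
  (forall j k, (j < N)%nat -> (k < N)%nat -> j <> k ->
     exists c, (c < 3)%nat /\ r j c t <> r k c t) ->
  (forall j k, (j < N)%nat -> (k < N)%nat ->
     accel N G m r j c t = accel N G m r k c t) ->
  forall i, (i < N)%nat -> r i c t = r 0%nat c t.
Proof.
  intros HN HG Hm Hd Ha.
  set (term := fun j i => if Nat.eq_dec i j then 0
                else m i * (r i c t - r j c t) / (dist3 r i j t ^ 3)).
  assert (Hacc : forall j, accel N G m r j c t = G * sum_f_R0 (term j) (N - 1))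
    by reflexivity.
  assert (Hsgn : forall j i, (j < N)%nat -> (i < N)%nat -> i <> j ->
            0 < m i / (dist3 r i j t ^ 3)).
  { intros j i Hj Hi Hij. assert (0 < dist3 r i j t) by (apply dist3_pos, Hd; auto).
    apply Rdiv_lt_0_compat; [apply Hm; auto|apply pow_lt; auto]. }
  assert (Hterm : forall j i, term j i = if Nat.eq_dec i j then 0
        else (m i / (dist3 r i j t ^ 3)) * (r i c t - r j c t)).
  { intros j i; unfold term; destruct (Nat.eq_dec i j); [reflexivity|].
    unfold Rdiv; ring. }
  destruct (exists_max (fun i => r i c t) (N - 1)) as [jM [HjM HM]].
  destruct (exists_max (fun i => - r i c t) (N - 1)) as [jm [Hjm Hmn]].
  assert (S1 : sum_f_R0 (term jM) (N - 1) <= 0).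
  { apply sum_nonpos; intros i Hi. rewrite Hterm.
    destruct (Nat.eq_dec i jM); [lra|].
    assert (0 < m i / dist3 r i jM t ^ 3) by (apply Hsgn; lia).
    pose proof (HM i Hi). simpl in *. nra. }
  assert (S2 : 0 <= sum_f_R0 (term jm) (N - 1)).
  { apply sum_nonneg; intros i Hi. rewrite Hterm.
    destruct (Nat.eq_dec i jm); [lra|].
    assert (0 < m i / dist3 r i jm t ^ 3) by (apply Hsgn; lia).
    pose proof (Hmn i Hi). simpl in *. nra. }
  assert (E : accel N G m r jM c t = accel N G m r jm c t) by (apply Ha; lia).
  rewrite !Hacc in E.
  assert (Z : sum_f_R0 (term jM) (N - 1) = 0) by nra.
  assert (All : forall i, (i < N)%nat -> r i c t = r jM c t).
  { intros i Hi. destruct (Nat.eq_dec i jM) as [->|Hne]; [reflexivity|].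
    pose proof (sum_nonpos_zero (term jM) (N - 1)) as Hz.
    assert (Tz : term jM i = 0).
    { apply Hz; [|exact Z|lia]. intros i' Hi'. rewrite Hterm.
      destruct (Nat.eq_dec i' jM); [lra|].
      assert (0 < m i' / dist3 r i' jM t ^ 3) by (apply Hsgn; lia).
      pose proof (HM i' Hi'). simpl in *. nra. }
    rewrite Hterm in Tz. destruct (Nat.eq_dec i jM); [contradiction|].
    assert (0 < m i / dist3 r i jM t ^ 3) by (apply Hsgn; lia).
    apply Rmult_integral in Tz as [Tz|Tz]; lra. }
  intros i Hi. rewrite (All i Hi), (All 0%nat ltac:(lia)). reflexivity.
Qed.

Theorem corollary2 (N : nat) (G : R) (m : nat -> R) (I : R -> Prop)
  (r r1 r2 : nat -> nat -> R -> R) :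
  (3 <= N)%nat ->
  0 < G ->
  (forall i, (i < N)%nat -> 0 < m i) ->
  is_interval I -> nondegenerate I ->
  (forall j c, (j < N)%nat -> (c < 3)%nat ->
     has_derive_on I (r j c) (r1 j c) /\
     has_derive_on I (r1 j c) (r2 j c) /\
     continuous_on_I I (r2 j c)) ->
  (forall t j k, I t -> (j < N)%nat -> (k < N)%nat -> j <> k ->
     exists c, (c < 3)%nat /\ r j c t <> r k c t) ->
  (forall j k c t, (j < k)%nat -> (k < N)%nat -> (c < 3)%nat -> I t ->
     r2 j c t - r2 k c t = accel N G m r j c t - accel N G m r k c t) ->
  exists j1 j2 j3 j4,
    (j1 < j2)%nat /\ (j2 < N)%nat /\ (j3 < j4)%nat /\ (j4 < N)%nat /\
    (j1, j2) <> (j3, j4) /\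
    (exists t c, I t /\ (c < 3)%nat /\ r2 j1 c t - r2 j2 c t <> 0) /\
    (exists t c, I t /\ (c < 3)%nat /\ r2 j3 c t - r2 j4 c t <> 0).
Proof.
  intros HN HG Hm _ [t0 [b [Ht0 _]]] _ Hd Heq.
  set (A := fun j c => accel N G m r j c t0).
  assert (Pair : forall p q c, (p < N)%nat -> (q < N)%nat -> (c < 3)%nat ->
            A p c <> A q c -> exists a b, (a < b)%nat /\ (b < N)%nat /\
            ((a = p /\ b = q) \/ (a = q /\ b = p)) /\
            (exists t c, I t /\ (c < 3)%nat /\ r2 a c t - r2 b c t <> 0)).
  { intros p q c Hp Hq Hc HA.
    destruct (Nat.lt_total p q) as [Hlt|[Heq'|Hgt]].
    - exists p, q; split; [lia|split; [lia|split; [auto|]]].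
      exists t0, c; split; [auto|split; [auto|]].
      rewrite Heq by auto. unfold A in HA; lra.
    - subst; contradiction.
    - exists q, p; split; [lia|split; [lia|split; [auto|]]].
      exists t0, c; split; [auto|split; [auto|]].
      rewrite Heq by auto. unfold A in HA; lra. }
  destruct (classic (exists j k c, (j < N)%nat /\ (k < N)%nat /\ (c < 3)%nat /\
                                  A j c <> A k c)) as [[j [k [c [Hj [Hk [Hc HA]]]]]]|Hno].
  - assert (Hjk : j <> k) by (intro; subst; contradiction).
    assert (Hl : exists l, (l < N)%nat /\ l <> j /\ l <> k).
    { destruct (Nat.eq_dec j 0); destruct (Nat.eq_dec k 0);
      destruct (Nat.eq_dec j 1); destruct (Nat.eq_dec k 1).
      all: first [exists 0%nat; split; [lia|split; lia]
                 |exists 1%nat; split; [lia|split; lia]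
                 |exists 2%nat; split; [lia|split; lia]]. }
    destruct Hl as [l [Hl [Hlj Hlk]]].
    destruct (Pair j k c Hj Hk Hc HA) as [a [b' [Hab [HbN [Hor Hnz]]]]].
    destruct (Req_dec (A l c) (A j c)) as [Elj|Elj].
    + assert (HA2 : A l c <> A k c) by (rewrite Elj; exact HA).
      destruct (Pair l k c Hl Hk Hc HA2) as [a2 [b2 [Hab2 [HbN2 [Hor2 Hnz2]]]]].
      exists a, b', a2, b2. repeat split; auto.
      intro E; injection E as E1 E2; lia.
    + destruct (Pair l j c Hl Hj Hc Elj) as [a2 [b2 [Hab2 [HbN2 [Hor2 Hnz2]]]]].
      exists a, b', a2, b2. repeat split; auto.
      intro E; injection E as E1 E2; lia.
  - exfalso.
    assert (Hall : forall c, (c < 3)%nat -> forall i, (i < N)%nat ->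
              r i c t0 = r 0%nat c t0).
    { intros c Hc. apply (coord_equal N G m r t0 c ltac:(lia) HG Hm).
      - intros j k Hj Hk Hjk; apply Hd; auto.
      - intros j k Hj Hk. apply NNPP; intro Hne. apply Hno.
        exists j, k, c; auto. }
    destruct (Hd t0 0%nat 1%nat Ht0 ltac:(lia) ltac:(lia) ltac:(lia)) as [c [Hc Hne]].
    apply Hne. symmetry. apply Hall; auto; lia.
Qed.
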